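(* For every integer $n\ge1$, with $$S_{n,n}=(-1)^n\sum_{i=0}^n\sum_{p=0}^i(-1)^p\binom{n+1}{i-p}p^n,\qquad C_{n,n}=\sum_{k=1}^n\frac{2^n-2^{n-k}}{k+1}\sum_{t=0}^{k+1}(-1)^t\binom{k+1}{t}t^{n+1},$$ one has $S_{n,n}=C_{n,n}$.
   Context: Convention $0^0=1$. *)

(* Defs.v *)
(* all quantities computed in rat (C_{n,n} involves division by k+1).
   Powers use ^+ with 0 ^+ 0 = 1, matching the convention 0^0 = 1. *)
From HB Require Import structures.
From mathcomp Require Import all_boot all_order all_algebra.
Set Implicit Arguments. Unset Strict Implicit. Unset Printing Implicit Defensive.
Import Order.TTheory GRing.Theory Num.Theory.
Local Open Scope ring_scope.

Definition S_nn (n : nat) : rat :=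
  (-1) ^+ n * \sum_(0 <= i < n.+1) \sum_(0 <= p < i.+1)
      (-1) ^+ p * ('C(n.+1, i - p))%:R * (p%:R) ^+ n.

Definition C_nn (n : nat) : rat :=
  \sum_(1 <= k < n.+1)
    ((2 ^+ n - 2 ^+ (n - k)) / (k.+1)%:R) *
    \sum_(0 <= t < k.+2) (-1) ^+ t * ('C(k.+1, t))%:R * (t%:R) ^+ n.+1.

(* Main.v *)
Require Import Defs.
From HB Require Import structures.
From mathcomp Require Import all_boot all_order all_algebra.
Import Order.TTheory GRing.Theory Num.Theory.
Local Open Scope ring_scope.

Lemma sign_sq (s : nat) : (-1) ^+ s * (-1) ^+ s = 1 :> rat.
Proof. by rewrite -exprMn mulrNN mulr1 expr1n. Qed.

Lemma sign_sub (m s : nat) : (s <= m)%N -> (-1) ^+ (m - s) = (-1) ^+ m * (-1) ^+ s :> rat.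
Proof.
move=> hs. rewrite -{2}(subnK hs) exprD -mulrA sign_sq mulr1 //.
Qed.

Definition A (m : nat) (g : rat -> rat) (x : rat) : rat :=
  \sum_(s < m.+1) (-1) ^+ s * ('C(m, s))%:R * g (x + s%:R).

Lemma A0 g x : A 0 g x = g x.
Proof. by rewrite /A big_ord1 /= expr0 mul1r bin0 mul1r addr0. Qed.
Lemma AS m g x : A m.+1 g x = A m g x - A m g (x + 1).
Proof.
rewrite /A big_ord_recl [X in _ = X - _]big_ord_recl /=.
under eq_bigr => i _ do rewrite binS natrD mulrDr mulrDl.
rewrite big_split /= big_ord_recr /= (bin_small (ltnSn m)) mulr0 mul0r addr0 !bin0 addrA.
congr (_ + _ + _).
  by rewrite addr0.
rewrite -sumrN; apply: eq_bigr => i _.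
rewrite exprS mulN1r !mulNr. congr (- _).
by rewrite /bump /= add1n -nat1r addrA.
Qed.
Lemma A_pow d m a : (d < m)%N -> A m (fun y => y ^+ d) a = 0.
Proof.
elim: d m a => [|d IH] m a hm.
  rewrite /A. transitivity ((1 + (-1 : rat)) ^+ m).
    rewrite exprDn; apply: eq_bigr => i _.
    by rewrite expr1n mul1r mulr_natr expr0 mulr1.
  by rewrite subrr expr0n; case: m hm.
case: m hm => [//|m] hm.
rewrite /A.
under eq_bigr => i _ do rewrite exprSr mulrDr mulrDr.
rewrite big_split /=.
have -> : \sum_(i < m.+2) (-1) ^+ i * 'C(m.+1, i)%:R * ((a + i%:R) ^+ d * a)
   = A m.+1 (fun y => y ^+ d) a * a.
  by rewrite /A mulr_suml; apply: eq_bigr => i _; rewrite mulrA.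
rewrite IH ?mul0r ?add0r; last by apply: ltnW.
rewrite big_ord_recl /= mulr0 add0r.
transitivity (- (m.+1)%:R * A m (fun y => y ^+ d) (a + 1)); last first.
  by rewrite IH // mulr0.
rewrite /A mulr_sumr; apply: eq_bigr => i _.
rewrite /bump /= add1n exprS mulN1r.
have -> : (a + i.+1%:R) = (a + 1 + i%:R) by rewrite -nat1r addrA.
rewrite -[(i.+1)%:R]/(i.+1)%:R.
rewrite mulNr mulNr mulNr; congr (- _).
have h : 'C(m.+1, i.+1)%:R * (i.+1)%:R = (m.+1)%:R * 'C(m, i)%:R :> rat.
  by rewrite -!natrM mulnC -mul_bin_diag.
rewrite [_ ^+ d * _]mulrC mulrA -[_ * 'C(m.+1, i.+1)%:R * _]mulrA h.
by rewrite mulrCA -!mulrA.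
Qed.
Lemma A_refl m g a x : A m (fun y => g (a - y)) x = (-1) ^+ m * A m g (a - x - m%:R).
Proof.
rewrite /A (reindex_inj rev_ord_inj) /= mulr_sumr; apply: eq_bigr => i _.
have hi : (i <= m)%N by rewrite -ltnS.
rewrite subSS sign_sub // bin_sub // natrB //.
rewrite -!mulrA; congr (_ * (_ * (_ * g _))).
by rewrite opprD opprB !addrA addrAC.
Qed.

Lemma A_comp m k g x : A m (A k g) x = A (m + k) g x.
Proof.
elim: m x => [|m IH] x; first by rewrite A0.
by rewrite AS !IH addSn AS.
Qed.

Lemma A_sub m g1 g2 x : A m (fun y => g1 y - g2 y) x = A m g1 x - A m g2 x.
Proof. by rewrite /A -sumrB; apply: eq_bigr => i _; rewrite mulrBr. Qed.

Lemma A_scale m (c : rat) g x : A m (fun y => c * g y) x = c * A m g x.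
Proof. by rewrite /A mulr_sumr; apply: eq_bigr => i _; rewrite mulrCA. Qed.

Lemma AS' m g x : A m g (x + 1) = A m g x - A m.+1 g x.
Proof. by rewrite AS opprB addrCA subrr addr0. Qed.

Definition G (n : nat) (c : rat) (x : rat) : rat :=
  \sum_(k < n.+1) c ^+ k * A k (fun y => y ^+ n) x.

Lemma A_G m n c x : A m (G n c) x = \sum_(k < n.+1) c ^+ k * A (m + k) (fun y => y ^+ n) x.
Proof.
transitivity (\sum_(k < n.+1) c ^+ k * A m (A k (fun y => y ^+ n)) x); last first.
  by apply: eq_bigr => k _; rewrite A_comp.
rewrite /A /G.
under eq_bigr => s _ do rewrite mulr_sumr.
rewrite exchange_big; apply: eq_bigr => k _.
rewrite mulr_sumr; apply: eq_bigr => s _.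
by rewrite mulrCA.
Qed.

Lemma A_G0 m n c x : (n < m)%N -> A m (G n c) x = 0.
Proof.
move=> h; rewrite A_G big1 // => k _.
by rewrite A_pow ?mulr0 // (leq_trans h) // leq_addr.
Qed.

Lemma G_tele n c x : c * G n c (x + 1) = c * G n c x - G n c x + x ^+ n.
Proof.
have h : c * \sum_(k < n.+1) c ^+ k * A k.+1 (fun y => y ^+ n) x
       = G n c x - x ^+ n.
  have e : \sum_(k < n.+2) c ^+ k * A k (fun y => y ^+ n) x = G n c x.
    by rewrite big_ord_recr /= A_pow // mulr0 addr0.
  rewrite -e [X in _ = X - _]big_ord_recl /= expr0 mul1r A0 (addrC (x ^+ n)) addrK mulr_sumr.
  apply: eq_bigr => k _.
  by rewrite /bump /= exprS mulrA.
have e1 : G n c (x + 1) = G n c x - \sum_(k < n.+1) c ^+ k * A k.+1 (fun y => y ^+ n) x.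
  by rewrite /G -sumrB; apply: eq_bigr => k _; rewrite AS' mulrBr.
by rewrite e1 mulrBr h opprB addrA addrAC.
Qed.

Lemma Tp n y : 2^-1 * (G n 2^-1 y + G n 2^-1 (y + 1)) = y ^+ n.
Proof.
rewrite mulrDr G_tele !addrA -mulrDl.
have -> : (2^-1 + 2^-1 : rat) = 1 by [].
by rewrite mul1r subrr add0r.
Qed.

Lemma sum_bin m : \sum_(s < m.+1) ('C(m, s))%:R = (1 + 1 : rat) ^+ m.
Proof.
by rewrite exprDn; apply: eq_bigr => i _; rewrite !expr1n mul1r.
Qed.

Lemma Gsym n y : G n 2^-1 y = (-1) ^+ n * G n 2^-1 (1 - y).
Proof.
set g := G n 2^-1.
set D := fun z => g z - (-1) ^+ n * g (1 - z).
have hD : forall z, D (z + 1) = - D z.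
  move=> z; apply: (@mulfI _ (2^-1 : rat)) => //.
  apply/eqP; rewrite -subr_eq0 mulrN opprK -mulrDr /D.
  have e : g (z + 1) - (-1) ^+ n * g (1 - (z + 1)) + (g z - (-1) ^+ n * g (1 - z))
         = (g z + g (z + 1)) - (-1) ^+ n * (g (- z) + g (- z + 1)).
    have h1 : 1 - (z + 1) = - z by rewrite opprD addrCA subrr addr0.
    rewrite h1 (addrC 1) mulrDr opprD addrACA (addrC (g z)) //.
  rewrite e mulrBr mulrCA /g !Tp (exprNn z) mulrA sign_sq mul1r subrr //.
have hDs : forall z (s : nat), D (z + s%:R) = (-1) ^+ s * D z.
  move=> w; elim=> [|s IH]; first by rewrite addr0 expr0 mul1r.
  by rewrite -natr1 addrA hD IH exprS mulN1r mulNr.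
have hA : A n.+1 D y = (1 + 1) ^+ n.+1 * D y.
  rewrite -sum_bin mulr_suml /A; apply: eq_bigr => s _.
  by rewrite hDs -mulrA mulrCA [(-1) ^+ s * (_ * D y)]mulrA sign_sq mul1r.
have hA0 : A n.+1 D y = 0.
  rewrite /D (A_sub _ g (fun z => (-1) ^+ n * g (1 - z))).
  rewrite (A_scale _ ((-1) ^+ n) (fun z => g (1 - z))) (A_refl _ g 1).
  by rewrite /g !A_G0 // !mulr0 subrr.
move: hA; rewrite hA0 => /esym /eqP; rewrite mulf_eq0 expf_eq0 /= => /eqP.
by rewrite /D => /eqP; rewrite subr_eq0 => /eqP.
Qed.

Lemma conv (u v : nat -> rat) M :
  \sum_(0 <= i < M.+1) \sum_(0 <= p < i.+1) u (i - p)%N * v p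
  = \sum_(0 <= j < M.+1) u j * \sum_(0 <= q < (M - j).+1) v q.
Proof.
elim: M => [|M IH]; first by rewrite !big_nat1.
rewrite big_nat_recr //= IH [in RHS]big_nat_recr //= subnn big_nat1.
have -> : \sum_(0 <= i < M.+1) u i * \sum_(0 <= q < (M.+1 - i).+1) v q
   = \sum_(0 <= j < M.+1) (u j * \sum_(0 <= q < (M - j).+1) v q + u j * v (M.+1 - j)%N).
  apply: eq_big_nat => j /andP[_ hj]; rewrite subSn // big_nat_recr //= mulrDr //.

rewrite big_split /= -addrA; congr (_ + _).
have -> : u M.+1 * v 0%N = u M.+1 * v (M.+1 - M.+1)%N by rewrite subnn.
rewrite -(big_nat_recr _ _ (fun j => u j * v (M.+1 - j)%N)) //.
rewrite big_nat_rev /=; apply: eq_big_nat => p /andP[_ hp].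
by rewrite add0n subSS subKn // mulrC.
Qed.

Lemma Hsum n m : \sum_(0 <= q < m.+1) (-1) ^+ q * (q%:R) ^+ n
  = 2^-1 * (G n 2^-1 0 + (-1) ^+ m * G n 2^-1 (m.+1)%:R).
Proof.
elim: m => [|m IH].
  by rewrite big_nat1 expr0 !mul1r -(Tp n 0) add0r.
rewrite big_nat_recr //= IH -(Tp n (m.+1)%:R) natr1 exprS mulN1r.
rewrite (mulrCA (- _)) -mulrDr; congr (_ * _).
by rewrite mulrDr !mulNr addrA addrK.
Qed.

Lemma S_closed n : S_nn n = (-1) ^+ n * ((1 + 1) ^+ n * G n 2^-1 0).
Proof.
rewrite /S_nn; congr (_ * _).
set g := G n 2^-1.
pose u j := ('C(n.+1, j))%:R : rat.
pose v p := (-1) ^+ p * (p%:R : rat) ^+ n.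
have e1 : \sum_(0 <= i < n.+1) \sum_(0 <= p < i.+1)
      (-1) ^+ p * ('C(n.+1, i - p))%:R * (p%:R : rat) ^+ n
    = \sum_(0 <= i < n.+2) \sum_(0 <= p < i.+1) u (i - p)%N * v p.
  rewrite [RHS]big_nat_recr //=.
  have -> : \sum_(0 <= p < n.+2) u (n.+1 - p)%N * v p = 0.
    rewrite (@eq_big_nat _ _ _ 0 n.+2 _ (fun p => (-1) ^+ p * ('C(n.+1, p))%:R * (0 + (p%:R : rat)) ^+ n)).
      by rewrite big_mkord -/(A n.+1 (fun y => y ^+ n) 0) A_pow.
    move=> p /andP[_ hp]; rewrite /u /v bin_sub // add0r.
    by rewrite mulrCA mulrA.
  rewrite addr0; apply: eq_bigr => i _; apply: eq_bigr => p _.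
  by rewrite /u /v -mulrA mulrCA mulrA.
rewrite e1 conv.
pose X j := (-1) ^+ (n.+1 - j) * g ((n.+1 - j).+1)%:R.
transitivity (\sum_(0 <= j < n.+2) (2^-1 * (g 0 * u j) + 2^-1 * (u j * X j))).
  apply: eq_bigr => j _.
  rewrite /v Hsum -/g /X.
  by rewrite -mulrDr mulrCA (mulrC (g 0)) -mulrDr.
rewrite big_split /= -(mulr_sumr _ _ (fun i => g 0 * u i)) -(mulr_sumr _ _ (fun i => u i * X i)).
have hX : \sum_(0 <= j < n.+2) u j * X j = 0.
  transitivity ((-1) ^+ n.+1 * A n.+1 (fun y => g ((n.+2)%:R - y)) 0).
    rewrite /A big_mkord mulr_sumr; apply: eq_bigr => j _.
    have hj : (j <= n.+1)%N by rewrite -ltnS ltn_ord.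
    rewrite /u /X sign_sub // -!mulrA mulrCA; congr (_ * _).
    rewrite mulrCA; congr (_ * (_ * g _)).
    by rewrite -subSn // natrB ?add0r // (leq_trans hj).
  by rewrite A_refl /g A_G0 // !mulr0.
rewrite hX addr0 big_mkord -mulr_sumr sum_bin exprS.
rewrite mulrCA [2^-1 * _]mulrA.
have -> : (2^-1 * (1 + 1) : rat) = 1 by [].
by rewrite mul1r mulrC.
Qed.

Lemma inner n k : \sum_(0 <= t < k.+2) (-1) ^+ t * ('C(k.+1, t))%:R * (t%:R : rat) ^+ n.+1
   = - (k.+1)%:R * A k (fun y => y ^+ n) 1.
Proof.
rewrite big_mkord big_ord_recl /= expr0n /= mulr0 add0r /A mulr_sumr.
apply: eq_bigr => i _.
rewrite /bump /= ?add1n exprS mulN1r exprSr !mulNr; congr (- _).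
have h : 'C(k.+1, i.+1)%:R * (i.+1)%:R = (k.+1)%:R * 'C(k, i)%:R :> rat.
  by rewrite -!natrM mulnC -mul_bin_diag.
rewrite -nat1r [_ ^+ n * _]mulrC mulrA -[_ * 'C(k.+1, i.+1)%:R * _]mulrA nat1r h.
by rewrite mulrCA -!mulrA.
Qed.

Lemma C_closed n : (1 <= n)%N -> C_nn n = 2 ^+ n * G n 2^-1 1.
Proof.
move=> hn.
rewrite /C_nn.
under eq_bigr => k _ do rewrite inner mulNr mulrN mulrA divfK ?pnatr_eq0 //.
set F := fun k => - ((2 ^+ n - 2 ^+ (n - k)) * A k (fun y => y ^+ n) 1).
transitivity (\sum_(0 <= k < n.+1) F k).
  by rewrite [RHS]big_ltn // /F subn0 subrr mul0r oppr0 add0r.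
rewrite (@eq_big_nat _ _ _ 0 n.+1 F (fun k => 2 ^+ n * (2^-1 ^+ k * A k (fun y => y ^+ n) 1)
      - 2 ^+ n * (1 ^+ k * A k (fun y => y ^+ n) 1))); last first.
  move=> k /andP[_ hk].
  have hP : 2 ^+ n * 2^-1 ^+ k = 2 ^+ (n - k) :> rat.
    rewrite -{1}(subnK (hk : (k <= n)%N)) exprD -mulrA -exprMn.
    have -> : (2 * 2^-1 : rat) = 1 by [].
    by rewrite expr1n mulr1.
  by rewrite /F expr1n mul1r mulrA hP mulrBl opprB.
have eG : forall c, \sum_(0 <= k < n.+1) c ^+ k * A k (fun y => y ^+ n) 1 = G n c 1.
  by move=> c; rewrite /G big_mkord.
have G1 : G n 1 1 = 0.
  have := G_tele n 1 0; rewrite !mul1r add0r subrr add0r expr0n eqn0Ngt hn /=.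
  done.
by rewrite sumrB -!mulr_sumr !eG G1 mulr0 subr0.
Qed.

Theorem mainTheorem14 (n : nat) : (1 <= n)%N -> S_nn n = C_nn n.
Proof.
move=> hn.
rewrite S_closed C_closed // (Gsym n 0) subr0 mulrCA [(-1) ^+ n * ((-1) ^+ n * _)]mulrA sign_sq mul1r.
by have -> : (1 + 1 : rat) = 2 by [].
Qed.
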